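(* For all integers $n,k\ge1$, no closed abstraction belongs to $\llbracket\sharp(\mathbb B^{n+k})\multimap(\sharp(\mathbb B^n)\times\sharp(\mathbb B^k))\rrbracket_\emptyset$; that is, the type $\sharp(\mathbb B^{n+k})\multimap(\sharp(\mathbb B^n)\times\sharp(\mathbb B^k))$ is uninhabited.
   Context: **Syntax.** Terms: $t ::= x \mid |0\rangle \mid |1\rangle \mid \mathsf{if}\ t\ \mathsf{then}\ \vec s\ \mathsf{else}\ \vec s \mid \lambda x.\vec t \mid t\,t \mid (t,t) \mid \mathsf{let}\ (x,y)=t\ \mathsf{in}\ \vec t$. Superpositions: $\vec t ::= t \mid \vec 0 \mid \alpha\cdot\vec t \mid \vec t+\vec t$, with $\alpha$ an algebraic complex number. Basis values: $v ::= |0\rangle\mid|1\rangle\mid\lambda x.\vec t\mid(v,v)$. Values are superpositions of basis values. **Equivalence.** Superpositions are taken modulo the vector-space congruence $\equiv$: $+$ is commutative and associative, $\vec0$ is neutral, $0\cdot\vec t\equiv\vec0$, $1\cdot\vec t\equiv\vec t$, $\alpha\cdot(\beta\cdot\vec t)\equiv\alpha\beta\cdot\vec t$, $\alpha\cdot\vec t+\beta\cdot\vec t\equiv(\alpha+\beta)\cdot\vec t$, and $\alpha\cdot(\vec t_1+\vec t_2)\equiv\alpha\cdot\vec t_1+\alpha\cdot\vec t_2$. **Linear extension.** Constructors are extended linearly in their evaluated positions: - $s(\sum_i\alpha_i t_i)\triangleq\sum_i\alpha_i\cdot s\,t_i$; - $(\sum_i\alpha_is_i,\sum_j\beta_jt_j)\triangleq\sum_{i,j}\alpha_i\beta_j\cdot(s_i,t_j)$;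 - $\mathsf{if}$ and $\mathsf{let}$ distribute over a superposed guard or scrutinee. **Reduction $\rightsquigarrow$ (call-by-value, on closed superpositions).** - $\mathsf{if}\ |0\rangle\ \mathsf{then}\ \vec s\ \mathsf{else}\ \vec t\rightsquigarrow\vec s$ and $\mathsf{if}\ |1\rangle\ \mathsf{then}\ \vec s\ \mathsf{else}\ \vec t\rightsquigarrow\vec t$. - $(\lambda x.\vec t)\,v\rightsquigarrow\vec t[v/x]$ for a basis value $v$. - $\mathsf{let}\ (x,y)=(v,w)\ \mathsf{in}\ \vec t\rightsquigarrow\vec t[v/x,w/y]$. - Congruence rules reduce, using the linear extension: inside the guard of $\mathsf{if}$; in the argument of an application; in the function position when the argument is a basis value; in the first component of a pair; in the second component when the first is a basis value; and in the scrutinee of $\mathsf{let}$. - A superposition in canonical form $\sum_i\alpha_it_i+\sum_j\beta_jv_j$ reduces to $\sum_i\alpha_is_i+\sum_j\beta_jv_j$ when each $t_i\rightsquigarrow s_i$. Canonical form means: the superposed terms are pairwise distinct and all coefficients are nonzero. - Reduction is closed under $\equiv$. $\rightsquigarrow^*$ denotes the reflexive transitive closure of $\rightsquigarrow$. **Inner product and unit values.** On closed values, $\langle\sum_i\alpha_iv_i\mid\sum_j\beta_jw_j\rangle=\sum_{i,j}\overline{\alpha_i}\beta_j\delta_{v_i,w_j}$, where $\delta$ is the Kronecker delta on basis values. Let $\mathcal S_1$ be the set of closed values $\vec v$ with $|\langle\vec v|\vec v\rangle|^2=1$. **Base and span.** $\mathrm{base}(\vec v)$ is the set of basis values occurring with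 nonzero coefficient in $\vec v$. For a set $S$ of closed values, $\flat S=\bigcup_{\vec v\in S}\mathrm{base}(\vec v)$, and $\mathsf{span}(S)$ is the set of finite linear combinations of elements of $S$. **Realizability.** $\vec t\Vdash S$ iff $\vec t\rightsquigarrow^*\vec v$ for some $\vec v\in S$ (up to $\equiv$). **Types.** $A ::= X\mid A\multimap A\mid A\Rightarrow A\mid A\times A\mid Q\mid\S A\mid\forall X.A$, where ground types are $Q ::= \mathbb B\mid\sharp Q\mid\S Q\mid Q\times Q$. **Unitary semantics** (for $\tau$ mapping type variables to subsets of $\mathcal S_1$): - $\llbracket X\rrbracket_\tau=\tau(X)$; - $\llbracket\mathbb B\rrbracket_\tau=\{|0\rangle,|1\rangle\}$; - $\llbracket\sharp A\rrbracket_\tau=\mathsf{span}(\llbracket A\rrbracket_\tau)\cap\mathcal S_1$; - $\llbracket\S A\rrbracket_\tau=\llbracket A\rrbracket_\tau$; - $\llbracket A\multimap B\rrbracket_\tau=\{\lambda x.\vec t:\forall\vec v\in\llbracket A\rrbracket_\tau,(\lambda x.\vec t)\vec v\Vdash\llbracket B\rrbracket_\tau\}$; - $\llbracket A\Rightarrow B\rrbracket_\tau=\{\lambda x.\vec t:\forall v\in\flat\llbracket A\rrbracket_\tau,(\lambda x.\vec t)v\Vdash\llbracket B\rrbracket_\tau\}$; - $\llbracket A\times B\rrbracket_\tau=\{(\vec v,\vec w):\vec v\in\llbracket A\rrbracket_\tau,\vec w\in\llbracket B\rrbracket_\tau\}$; - $\llbracket\forall X.A\rrbracket_\tau=\bigcap_{R\subseteq\mathcal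 S_1}\llbracket A\rrbracket_{\tau\cup\{X\mapsto R\}}$. **Qubit notation.** $\mathbb B^1=\mathbb B$ and $\mathbb B^{m+1}=\mathbb B\times\mathbb B^m$. For $0\le i<2^n$ with binary digits $i_1\dots i_n$, let $|i\rangle\triangleq(|i_1\rangle,(|i_2\rangle,\dots(|i_{n-1}\rangle,|i_n\rangle)\dots))$. *)

(* Defs.v *)
From Stdlib Require Import Classical ClassicalEpsilon List.
From mathcomp Require Import all_boot all_order all_algebra all_field.
Set Implicit Arguments. Unset Strict Implicit. Unset Printing Implicit Defensive.
Import Order.TTheory GRing.Theory Num.Theory.
Local Open Scope ring_scope.

Inductive term : Type :=
| Var  : nat -> term
| Ket0 : term
| Ket1 : term
| If   : term -> sup -> sup -> term
| Lam  : nat -> sup -> term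
| App  : term -> term -> term
| Pair : term -> term -> term
| Let  : nat -> nat -> term -> sup -> term
with sup : Type :=
| STm    : term -> sup
| SZero  : sup
| SScale : algC -> sup -> sup
| SAdd   : sup -> sup -> sup.

Inductive teq : term -> term -> Prop :=
| teq_refl  : forall t, teq t t
| teq_sym   : forall t u, teq t u -> teq u t
| teq_trans : forall t u w, teq t u -> teq u w -> teq t w
| teq_If    : forall g g' s1 s1' s2 s2', teq g g' -> sequiv s1 s1' -> sequiv s2 s2' ->
                teq (If g s1 s2) (If g' s1' s2')
| teq_Lam   : forall x b b', sequiv b b' -> teq (Lam x b) (Lam x b')
| teq_App   : forall a a' c c', teq a a' -> teq c c' -> teq (App a c) (App a' c')
| teq_Pair  : forall a a' c c', teq a a' -> teq c c' -> teq (Pair a c) (Pair a' c')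
| teq_Let   : forall x y u u' b b', teq u u' -> sequiv b b' -> teq (Let x y u b) (Let x y u' b')
with sequiv : sup -> sup -> Prop :=
| seq_refl  : forall s, sequiv s s
| seq_sym   : forall s r, sequiv s r -> sequiv r s
| seq_trans : forall s r q, sequiv s r -> sequiv r q -> sequiv s q
| seq_STm   : forall t t', teq t t' -> sequiv (STm t) (STm t')
| seq_Scale : forall a s s', sequiv s s' -> sequiv (SScale a s) (SScale a s')
| seq_Add   : forall s1 s1' s2 s2', sequiv s1 s1' -> sequiv s2 s2' ->
                sequiv (SAdd s1 s2) (SAdd s1' s2')
| seq_comm  : forall s r, sequiv (SAdd s r) (SAdd r s)
| seq_assoc : forall s r q, sequiv (SAdd s (SAdd r q)) (SAdd (SAdd s r) q)
| seq_zeroN : forall s, sequiv (SAdd SZero s) s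
| seq_scale0 : forall s, sequiv (SScale 0 s) SZero
| seq_scale1 : forall s, sequiv (SScale 1 s) s
| seq_scaleM : forall a b s, sequiv (SScale a (SScale b s)) (SScale (a * b) s)
| seq_scaleDl : forall a b s, sequiv (SAdd (SScale a s) (SScale b s)) (SScale (a + b) s)
| seq_scaleDr : forall a s r, sequiv (SScale a (SAdd s r)) (SAdd (SScale a s) (SScale a r)).

Fixpoint cl_t (bs : seq nat) (t : term) : bool :=
  match t with
  | Var x => x \in bs
  | Ket0 | Ket1 => true
  | If g s1 s2 => [&& cl_t bs g, cl_s bs s1 & cl_s bs s2]
  | Lam x b => cl_s (x :: bs) b
  | App a c => cl_t bs a && cl_t bs c
  | Pair a c => cl_t bs a && cl_t bs c
  | Let x y u b => cl_t bs u && cl_s (x :: y :: bs) b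
  end
with cl_s (bs : seq nat) (s : sup) : bool :=
  match s with
  | STm t => cl_t bs t
  | SZero => true
  | SScale _ s' => cl_s bs s'
  | SAdd s1 s2 => cl_s bs s1 && cl_s bs s2
  end.
Definition closed_t (t : term) : bool := cl_t [::] t.
Definition closed_s (s : sup) : bool := cl_s [::] s.

Fixpoint bval (t : term) : Prop :=
  match t with
  | Ket0 | Ket1 => True
  | Lam _ _ => True
  | Pair a c => bval a /\ bval c
  | _ => False
  end.
Fixpoint syn_value (s : sup) : Prop :=
  match s with
  | STm t => bval t
  | SZero => True
  | SScale _ s' => syn_value s'
  | SAdd s1 s2 => syn_value s1 /\ syn_value s2
  end.

Fixpoint subst_t (t : term) (x : nat) (v : term) : term :=
  match t with
  | Var y => if y == x then v else Var y
  | Ket0 => Ket0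
  | Ket1 => Ket1
  | If g s1 s2 => If (subst_t g x v) (subst_s s1 x v) (subst_s s2 x v)
  | Lam y b => if y == x then Lam y b else Lam y (subst_s b x v)
  | App a c => App (subst_t a x v) (subst_t c x v)
  | Pair a c => Pair (subst_t a x v) (subst_t c x v)
  | Let y z u b => Let y z (subst_t u x v)
                     (if (y == x) || (z == x) then b else subst_s b x v)
  end
with subst_s (s : sup) (x : nat) (v : term) : sup :=
  match s with
  | STm t => STm (subst_t t x v)
  | SZero => SZero
  | SScale a s' => SScale a (subst_s s' x v)
  | SAdd s1 s2 => SAdd (subst_s s1 x v) (subst_s s2 x v)
  end.

Fixpoint smap (f : term -> term) (s : sup) : sup :=
  match s with
  | STm t => STm (f t)
  | SZero => SZero
  | SScale a s' => SScale a (smap f s')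
  | SAdd s1 s2 => SAdd (smap f s1) (smap f s2)
  end.
Fixpoint sbind (f : term -> sup) (s : sup) : sup :=
  match s with
  | STm t => f t
  | SZero => SZero
  | SScale a s' => SScale a (sbind f s')
  | SAdd s1 s2 => SAdd (sbind f s1) (sbind f s2)
  end.
(* (sum_i a_i v_i , sum_j b_j w_j) := sum_{i,j} a_i b_j (v_i, w_j) *)
Definition pair_sup (v w : sup) : sup := sbind (fun a => smap (Pair a) w) v.
Definition app_sup (f : term) (v : sup) : sup := smap (App f) v.

Definition tsum (l : list (algC * term)) : sup :=
  foldr (fun p acc => SAdd (SScale p.1 (STm p.2)) acc) SZero l.
Definition ssum (l : list (algC * sup)) : sup :=
  foldr (fun p acc => SAdd (SScale p.1 p.2) acc) SZero l.

Inductive tred : term -> sup -> Prop :=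
| r_if0   : forall s1 s2, tred (If Ket0 s1 s2) s1
| r_if1   : forall s1 s2, tred (If Ket1 s1 s2) s2
| r_beta  : forall x b v, bval v -> tred (App (Lam x b) v) (subst_s b x v)
| r_let   : forall x y v w b, bval v -> bval w ->
              tred (Let x y (Pair v w) b) (subst_s (subst_s b x v) y w)
| r_ifc   : forall g g' s1 s2, tred g g' -> tred (If g s1 s2) (smap (fun h => If h s1 s2) g')
| r_appR  : forall a c c', tred c c' -> tred (App a c) (smap (App a) c')
| r_appL  : forall a a' c, bval c -> tred a a' -> tred (App a c) (smap (fun h => App h c) a')
| r_pairL : forall a a' c, tred a a' -> tred (Pair a c) (smap (fun h => Pair h c) a')
| r_pairR : forall a c c', bval a -> tred c c' -> tred (Pair a c) (smap (Pair a) c')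
| r_letc  : forall x y u u' b, tred u u' -> tred (Let x y u b) (smap (fun h => Let x y h b) u').

(* A superposition in canonical form  sum_i a_i t_i + sum_j b_j v_j  (terms pairwise
   distinct up to ≡, coefficients nonzero) reduces to sum_i a_i s_i + sum_j b_j v_j
   when each t_i reduces to s_i; reduction is closed under ≡. *)
Definition red (s r : sup) : Prop :=
  exists (l : list (algC * term * sup)) (m : list (algC * term)),
    sequiv s (SAdd (tsum (map (fun p => (p.1.1, p.1.2)) l)) (tsum m)) /\
    sequiv r (SAdd (ssum (map (fun p => (p.1.1, p.2)) l)) (tsum m)) /\
    (forall p, List.In p l -> tred p.1.2 p.2 /\ p.1.1 != 0) /\
    (forall p, List.In p m -> bval p.2 /\ p.1 != 0) /\
    ForallOrdPairs (fun a c => ~ teq a c) (map (fun p => p.1.2) l ++ map snd m).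

Inductive reds : sup -> sup -> Prop :=
| reds_refl : forall s, reds s s
| reds_step : forall s r q, red s r -> reds r q -> reds s q.

Definition delta (t u : term) : algC :=
  if excluded_middle_informative (teq t u) then 1 else 0.
Fixpoint ipR (t : term) (w : sup) : algC :=
  match w with
  | STm u => delta t u
  | SZero => 0
  | SScale b w' => b * ipR t w'
  | SAdd w1 w2 => ipR t w1 + ipR t w2
  end.
Fixpoint ip (v w : sup) : algC :=
  match v with
  | STm t => ipR t w
  | SZero => 0
  | SScale a v' => a^* * ip v' w
  | SAdd v1 v2 => ip v1 w + ip v2 w
  end.

Definition cvalue (s : sup) : Prop :=
  exists s', sequiv s s' /\ closed_s s' /\ syn_value s'.
Definition S1 (s : sup) : Prop := cvalue s /\ `|ip s s| ^+ 2 = 1.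

Definition flat (S : sup -> Prop) (b : term) : Prop :=
  exists v, S v /\ bval b /\ ip (STm b) v != 0.
Definition span (S : sup -> Prop) (s : sup) : Prop :=
  exists l : list (algC * sup), (forall p, List.In p l -> S p.2) /\ sequiv s (ssum l).

Definition realizes (t : sup) (S : sup -> Prop) : Prop :=
  exists v v', reds t v /\ sequiv v v' /\ S v'.

Inductive ty : Type :=
| TVar    : nat -> ty
| TLin    : ty -> ty -> ty
| TArr    : ty -> ty -> ty
| TProd   : ty -> ty -> ty
| TBool   : ty
| TSharp  : ty -> ty
| TPar    : ty -> ty
| TForall : nat -> ty -> ty.

Definition env := nat -> sup -> Prop.
Definition env0 : env := fun _ _ => False.
Definition upd (tau : env) (X : nat) (R : sup -> Prop) : env :=
  fun Y => if Y == X then R else tau Y.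

Fixpoint sem (A : ty) (tau : env) : sup -> Prop :=
  match A with
  | TVar X => tau X
  | TBool => fun s => sequiv s (STm Ket0) \/ sequiv s (STm Ket1)
  | TSharp A' => fun s => span (sem A' tau) s /\ S1 s
  | TPar A' => sem A' tau
  | TLin A1 A2 => fun s => exists x b, closed_t (Lam x b) /\ sequiv s (STm (Lam x b)) /\
        forall v, sem A1 tau v -> realizes (app_sup (Lam x b) v) (sem A2 tau)
  | TArr A1 A2 => fun s => exists x b, closed_t (Lam x b) /\ sequiv s (STm (Lam x b)) /\
        forall v, flat (sem A1 tau) v -> realizes (STm (App (Lam x b) v)) (sem A2 tau)
  | TProd A1 A2 => fun s => exists v w, sem A1 tau v /\ sem A2 tau w /\ sequiv s (pair_sup v w)
  | TForall X A' => fun s => forall R : sup -> Prop, (forall u, R u -> S1 u) ->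
        sem A' (upd tau X R) s
  end.

(* B^1 = B, B^(m+1) = B x B^m  (the value at m = 0 is irrelevant) *)
Fixpoint tyBn (m : nat) : ty :=
  match m with
  | 0 => TBool
  | S m' => match m' with
            | 0 => TBool
            | S _ => TProd TBool (tyBn m')
            end
  end.

(* Main.v *)
Require Import Defs.
From Stdlib Require Import Classical ClassicalEpsilon List.
From mathcomp Require Import all_boot all_order all_algebra all_field.
From mathcomp Require Import zify ring.
Set Implicit Arguments. Unset Strict Implicit. Unset Printing Implicit Defensive.
Import Order.TTheory GRing.Theory Num.Theory.

Scheme teq_mut := Induction for teq Sort Prop
with sequiv_mut := Induction for sequiv Sort Prop.
Scheme term_mut := Induction for term Sort Prop
with sup_mut := Induction for sup Sort Prop.

Fixpoint skel (t : term) : term :=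
  match t with
  | Var x => Var x | Ket0 => Ket0 | Ket1 => Ket1
  | If g _ _ => If (skel g) SZero SZero
  | Lam x _ => Lam x SZero
  | App a c => App (skel a) (skel c)
  | Pair a c => Pair (skel a) (skel c)
  | Let x y u _ => Let x y (skel u) SZero
  end.

Definition Inv (t u : term) : Prop :=
  skel t = skel u /\
  match t, u with
  | Lam _ b, Lam _ b' => sequiv b b'
  | Pair a c, Pair a' c' => teq a a' /\ teq c c'
  | _, _ => True
  end.

Lemma Inv_sym t u : Inv t u -> Inv u t.
Proof.
move=> [H1 H2]; split => //.
destruct t; destruct u => //; try by apply seq_sym.
by case: H2 => ? ?; split; apply teq_sym.
Qed.

Lemma Inv_trans t u w : Inv t u -> Inv u w -> Inv t w.
Proof.
move=> [H1 H2] [H3 H4]; split; first by rewrite H1.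
destruct t; destruct u => //; destruct w => //; simpl in *; try discriminate.
- by apply: seq_trans H2 H4.
- by case: H2 => ? ?; case: H4 => ? ?; split; apply: teq_trans; eauto.
Qed.

Lemma teq_Inv t u : teq t u -> Inv t u.
Proof.
induction 1.
- split => //; destruct t => //; try apply seq_refl; split; apply teq_refl.
- by apply Inv_sym.
- by apply: Inv_trans; eauto.
- by split => //=; case: IHteq => ->.
- by split.
- by split => //=; case: IHteq1 => ->; case: IHteq2 => ->.
- by split => //=; case: IHteq1 => ->; case: IHteq2 => ->.
- by split => //=; case: IHteq => ->.
Qed.

Fixpoint pureK (t : term) : bool :=
  match t with
  | Ket0 | Ket1 => true
  | Pair a c => pureK a && pureK c
  | _ => false
  end.

Lemma pureK_skel k u : pureK k -> skel u = k -> u = k.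
Proof.
elim: k u => //=.
- by case.
- by case.
- move=> a IHa c IHc u /andP[pa pc]; case: u => //= a' c' [Ha Hc].
  by rewrite (IHa _ pa Ha) (IHc _ pc Hc).
Qed.

Lemma pureK_skel_id k : pureK k -> skel k = k.
Proof. elim: k => //= a IHa c IHc /andP[pa pc]; by rewrite IHa // IHc. Qed.

Lemma teq_pureK k u : pureK k -> (teq k u <-> k = u).
Proof.
move=> pk; split; last by move=> <-; apply teq_refl.
move=> /teq_Inv [H _]; rewrite pureK_skel_id // in H.
by symmetry; apply pureK_skel.
Qed.

Lemma skel_bval t u : skel t = skel u -> bval t -> bval u.
Proof.
elim: t u => //=; try by case.
- by move=> ? ? [].
- move=> a IHa c IHc [] //= a' c' [Ha Hc] [ba bc]; split; eauto.
Qed.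

Lemma teq_bval t u : teq t u -> bval t -> bval u.
Proof. by move=> /teq_Inv [H _]; apply skel_bval. Qed.

Lemma tred_nbval t s : tred t s -> ~ bval t.
Proof. induction 1; simpl; tauto. Qed.

Ltac nored := match goal with
 | Hr : tred ?t _ |- _ => solve [ inversion Hr | exfalso; apply (tred_nbval Hr); simpl; tauto ]
 end.

Lemma tred_det t s1 s2 : tred t s1 -> tred t s2 -> s1 = s2.
Proof.
move=> H; elim: H s2;
 intros; match goal with Hs : tred _ _ |- _ => inversion Hs; subst end;
 try reflexivity; try nored;
 match goal with IH: forall s, tred ?t s -> _ = s, H: tred ?t ?s |- _ => rewrite (IH _ H) end;
 reflexivity.
Qed.

Lemma subst_teq1 :
  (forall t t', teq t t' -> forall x v, teq (subst_t t x v) (subst_t t' x v)) /\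
  (forall s s', sequiv s s' -> forall x v, sequiv (subst_s s x v) (subst_s s' x v)).
Proof.
split.
- move=> t t' H; induction H using teq_mut with
   (P0 := fun s s' _ => forall x v, sequiv (subst_s s x v) (subst_s s' x v));
  intros; simpl; try by econstructor; eauto.
  + by case: (_ == _); constructor; eauto.
  + by case: (_ || _); constructor; eauto.
- move=> t t' H; induction H using sequiv_mut with
   (P := fun t t' _ => forall x v, teq (subst_t t x v) (subst_t t' x v));
  intros; simpl; try by econstructor; eauto.
  + by case: (_ == _); constructor; eauto.
  + by case: (_ || _); constructor; eauto.
Qed.

Lemma subst_teq2 v v' x : teq v v' ->
  (forall t, teq (subst_t t x v) (subst_t t x v')) /\
  (forall s, sequiv (subst_s s x v) (subst_s s x v')).
Proof.
move=> Hv.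
have H : forall t, teq (subst_t t x v) (subst_t t x v').
  move=> t; induction t using term_mut with
   (P0 := fun s => sequiv (subst_s s x v) (subst_s s x v'));
  intros; simpl; try by econstructor; eauto.
  + by case: (_ == _) => //; constructor.
  + by case: (_ == _); constructor; eauto; apply seq_refl.
  + by case: (_ || _); constructor; eauto; apply seq_refl.
split; first exact H.
move=> s; induction s; simpl; [apply seq_STm|apply seq_refl|apply seq_Scale|apply seq_Add]; eauto.
Qed.

Lemma subst_sequiv b b' x v v' : sequiv b b' -> teq v v' ->
  sequiv (subst_s b x v) (subst_s b' x v').
Proof.
move=> Hb Hv; apply: seq_trans.
- by apply (proj2 subst_teq1); exact Hb.
- by apply (proj2 (subst_teq2 x Hv)).
Qed.

Lemma smap_resp f s s' : (forall t t', teq t t' -> teq (f t) (f t')) ->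
  sequiv s s' -> sequiv (smap f s) (smap f s').
Proof. move=> Hf; induction 1; simpl; try by econstructor; eauto. Qed.

Lemma smap_pw f f' s : (forall t, teq (f t) (f' t)) -> sequiv (smap f s) (smap f' s).
Proof. move=> Hf; elim: s => /=; intros; try by econstructor; eauto. Qed.

Lemma smap_both f f' s s' : (forall t t', teq t t' -> teq (f t) (f t')) ->
  (forall t, teq (f t) (f' t)) -> sequiv s s' -> sequiv (smap f s) (smap f' s').
Proof. move=> H1 H2 H3; apply: seq_trans (smap_resp H1 H3) (smap_pw _ H2). Qed.

Definition fwd t t' := forall s, tred t s -> exists s', tred t' s' /\ sequiv s s'.

Lemma teq_Lam_inv x b a : teq (Lam x b) a -> exists b', a = Lam x b' /\ sequiv b b'.
Proof.
move=> /teq_Inv [H1 H2]; case: a H1 H2 => //= y b' [<-] H; by exists b'.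
Qed.

Lemma teq_Pair_inv v w a : teq (Pair v w) a ->
  exists v' w', a = Pair v' w' /\ teq v v' /\ teq w w'.
Proof.
move=> /teq_Inv [H1 H2]; case: a H1 H2 => //= v' w' _ [? ?]; by exists v', w'.
Qed.

Lemma teq_Ket0 a : teq Ket0 a -> a = Ket0.
Proof. by move=> /(teq_pureK a (isT : pureK Ket0)) ->. Qed.
Lemma teq_Ket1 a : teq Ket1 a -> a = Ket1.
Proof. by move=> /(teq_pureK a (isT : pureK Ket1)) ->. Qed.

Lemma cong_If g g' s1 s1' s2 s2' : teq g g' -> fwd g g' -> sequiv s1 s1' -> sequiv s2 s2' ->
  fwd (If g s1 s2) (If g' s1' s2').
Proof.
move=> Hg Fg H1 H2 s Hs; inversion Hs; subst.
- rewrite (teq_Ket0 Hg); eexists; split; [apply r_if0 | done].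
- rewrite (teq_Ket1 Hg); eexists; split; [apply r_if1 | done].
- match goal with Hr0 : tred g _ |- _ => case: (Fg _ Hr0) end => g0 [Hr Heq]; eexists; split; first by apply r_ifc; exact Hr.
  apply smap_both => //.
  + by move=> t t' ?; apply teq_If => //; apply seq_refl.
  + by move=> t; apply teq_If => //; apply teq_refl.
Qed.

Lemma cong_App a a' c c' : teq a a' -> teq c c' -> fwd a a' -> fwd c c' ->
  fwd (App a c) (App a' c').
Proof.
move=> Ha Hc Fa Fc s Hs; inversion Hs; subst.
- case: (teq_Lam_inv Ha) => b' [-> Hb]; eexists; split.
  + by apply r_beta; apply: teq_bval Hc _; assumption.
  + by apply subst_sequiv.
- match goal with Hr0 : tred c _ |- _ => case: (Fc _ Hr0) end => c0 [Hr Heq]; eexists; split; first by apply r_appR; exact Hr.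
  apply smap_both => //.
  + by move=> t t' ?; apply teq_App => //; apply teq_refl.
  + by move=> t; apply teq_App => //; apply teq_refl.
- match goal with Hr0 : tred a _ |- _ => case: (Fa _ Hr0) end => a0 [Hr Heq]; eexists; split.
  + by apply r_appL; [apply: teq_bval Hc _; assumption | exact Hr].
  apply smap_both => //.
  + by move=> t t' ?; apply teq_App => //; apply teq_refl.
  + by move=> t; apply teq_App => //; apply teq_refl.
Qed.

Lemma cong_Pair a a' c c' : teq a a' -> teq c c' -> fwd a a' -> fwd c c' ->
  fwd (Pair a c) (Pair a' c').
Proof.
move=> Ha Hc Fa Fc s Hs; inversion Hs; subst.
- match goal with Hr0 : tred a _ |- _ => case: (Fa _ Hr0) end => a0 [Hr Heq]; eexists; split; first by apply r_pairL; exact Hr.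
  apply smap_both => //.
  + by move=> t t' ?; apply teq_Pair => //; apply teq_refl.
  + by move=> t; apply teq_Pair => //; apply teq_refl.
- match goal with Hr0 : tred c _ |- _ => case: (Fc _ Hr0) end => c0 [Hr Heq]; eexists; split.
  + by apply r_pairR; [apply: teq_bval Ha _; assumption | exact Hr].
  apply smap_both => //.
  + by move=> t t' ?; apply teq_Pair => //; apply teq_refl.
  + by move=> t; apply teq_Pair => //; apply teq_refl.
Qed.

Lemma cong_Let x y u u' b b' : teq u u' -> fwd u u' -> sequiv b b' ->
  fwd (Let x y u b) (Let x y u' b').
Proof.
move=> Hu Fu Hb s Hs; inversion Hs; subst.
- case: (teq_Pair_inv Hu) => v' [w' [-> [Hv Hw]]]; eexists; split.
  + by apply r_let; [apply: teq_bval Hv _ | apply: teq_bval Hw _]; assumption.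
  + by apply subst_sequiv => //; apply subst_sequiv.
- match goal with Hr0 : tred u _ |- _ => case: (Fu _ Hr0) end => u0 [Hr Heq]; eexists; split; first by apply r_letc; exact Hr.
  apply smap_both => //.
  + by move=> t t' ?; apply teq_Let => //; apply seq_refl.
  + by move=> t; apply teq_Let => //; apply teq_refl.
Qed.

Lemma teq_tred t t' : teq t t' -> fwd t t' /\ fwd t' t.
Proof.
induction 1.
- by split => s Hs; exists s; split => //; apply seq_refl.
- by case: IHteq.
- case: IHteq1 => F1 G1; case: IHteq2 => F2 G2; split => s Hs.
  + case: (F1 _ Hs) => s1 [H1 E1]; case: (F2 _ H1) => s2 [H2 E2].
    by exists s2; split => //; apply: seq_trans E1 E2.
  + case: (G2 _ Hs) => s1 [H1 E1]; case: (G1 _ H1) => s2 [H2 E2].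
    by exists s2; split => //; apply: seq_trans E1 E2.
- case: IHteq => F G; split; apply cong_If; first [assumption | by apply teq_sym | by apply seq_sym].
- by split => s Hs; inversion Hs.
- case: IHteq1 => F1 G1; case: IHteq2 => F2 G2.
  by split; apply cong_App => //; apply teq_sym.
- case: IHteq1 => F1 G1; case: IHteq2 => F2 G2.
  by split; apply cong_Pair => //; apply teq_sym.
- case: IHteq => F G; split; apply cong_Let; first [assumption | by apply teq_sym | by apply seq_sym].
Qed.

Definition gstep (t : term) : sup :=
  match excluded_middle_informative (exists s, tred t s) with
  | left H => proj1_sig (constructive_indefinite_description _ H)
  | right _ => STm t
  end.

Lemma gstep_red t s : tred t s -> gstep t = s.
Proof.
move=> H; rewrite /gstep; case: excluded_middle_informative => [H'|H']; last first.
  by case: H'; exists s.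
case: (constructive_indefinite_description _ H') => s' Hs' /=.
exact: tred_det Hs' H.
Qed.

Lemma gstep_nored t : ~ (exists s, tred t s) -> gstep t = STm t.
Proof. by move=> H; rewrite /gstep; case: excluded_middle_informative. Qed.

Lemma gstep_bval t : bval t -> gstep t = STm t.
Proof. by move=> H; apply gstep_nored => -[s /tred_nbval]. Qed.

Lemma gstep_teq t t' : teq t t' -> sequiv (gstep t) (gstep t').
Proof.
move=> H; case: (teq_tred H) => F G.
case: (classic (exists s, tred t s)) => [[s Hs]|Hn].
- case: (F _ Hs) => s' [Hs' E]; by rewrite (gstep_red Hs) (gstep_red Hs').
- have Hn' : ~ (exists s, tred t' s).
    by move=> [s' Hs']; case: (G _ Hs') => s [Hs _]; apply Hn; exists s.
  by rewrite (gstep_nored Hn) (gstep_nored Hn'); apply seq_STm.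
Qed.

Definition stepS (s : sup) : sup := sbind gstep s.

Lemma sbind_resp f s s' : (forall t t', teq t t' -> sequiv (f t) (f t')) ->
  sequiv s s' -> sequiv (sbind f s) (sbind f s').
Proof.
move=> Hf; induction 1; simpl.
- by apply seq_refl.
- by apply seq_sym.
- by apply: seq_trans; eauto.
- by apply Hf.
- by apply seq_Scale.
- by apply seq_Add.
- by apply seq_comm.
- by apply seq_assoc.
- by apply seq_zeroN.
- by apply seq_scale0.
- by apply seq_scale1.
- by apply seq_scaleM.
- by apply seq_scaleDl.
- by apply seq_scaleDr.
Qed.

Lemma sbind_pw f f' s : (forall t, sequiv (f t) (f' t)) -> sequiv (sbind f s) (sbind f' s).
Proof.
move=> H; elim: s => /=; intros.
- exact: H.
- exact: seq_refl.
- by apply seq_Scale.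
- by apply seq_Add.
Qed.

Lemma sbind_assoc g h s : sbind g (sbind h s) = sbind (fun t => sbind g (h t)) s.
Proof. by elim: s => //= [a s -> | s1 -> s2 ->]. Qed.

Lemma smap_sbind f s : smap f s = sbind (fun t => STm (f t)) s.
Proof. by elim: s => //= [a s -> | s1 -> s2 ->]. Qed.

Lemma iter_sbind M h s :
  iter M stepS (sbind h s) = sbind (fun t => iter M stepS (h t)) s.
Proof.
elim: M => /= [|M IH]; first by elim: s => //= [a s -> | s1 -> s2 ->].
by rewrite IH /stepS sbind_assoc.
Qed.

Lemma stepS_resp s s' : sequiv s s' -> sequiv (stepS s) (stepS s').
Proof. by apply sbind_resp => t t'; apply gstep_teq. Qed.

Lemma iter_resp M s s' : sequiv s s' -> sequiv (iter M stepS s) (iter M stepS s').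
Proof. by elim: M => //= M IH H; apply stepS_resp; apply IH. Qed.

Lemma stepS_value s : syn_value s -> stepS s = s.
Proof.
elim: s => //= [t Ht | a s IH H | s1 IH1 s2 IH2 [H1 H2]].
- by rewrite /stepS /= gstep_bval.
- by rewrite /stepS /= -/(stepS s) IH.
- by rewrite /stepS /= -/(stepS s1) -/(stepS s2) IH1 // IH2.
Qed.

Lemma red_step s r : red s r -> sequiv r (stepS s).
Proof.
move=> [l [m [Hs [Hr [Hl [Hm _]]]]]].
apply: seq_trans Hr _; apply seq_sym; apply: seq_trans (stepS_resp Hs) _.
rewrite /stepS /=; clear Hs; apply seq_Add.
- have -> : sbind gstep (tsum [seq (p.1.1, p.1.2) | p <- l]) =
            ssum [seq (p.1.1, p.2) | p <- l].
    elim: l Hl => //= p l IH Hl.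
    rewrite IH; last by move=> q Hq; apply Hl; right.
    by rewrite (gstep_red (proj1 (Hl p (or_introl erefl)))).
  exact: seq_refl.
- have -> : sbind gstep (tsum m) = tsum m.
    elim: m Hm => //= p m IH Hm.
    rewrite IH; last by move=> q Hq; apply Hm; right.
    by rewrite (gstep_bval (proj1 (Hm p (or_introl erefl)))).
  exact: seq_refl.
Qed.

Lemma reds_iter s v : reds s v -> exists m, sequiv (iter m stepS s) v.
Proof.
induction 1; first by exists 0%N; apply seq_refl.
case: IHreds => m Hm; exists m.+1; rewrite iterSr.
apply: seq_trans _ Hm; apply iter_resp; apply seq_sym; exact: red_step.
Qed.

Lemma fix_value v v' : sequiv v v' -> syn_value v' -> forall M, sequiv (iter M stepS v) v.
Proof.
move=> E Hv; elim => /= [|M IH]; first exact: seq_refl.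
apply: seq_trans (stepS_resp IH) _.
apply: seq_trans (stepS_resp E) _.
rewrite stepS_value //; exact: seq_sym.
Qed.

Open Scope ring_scope.

Lemma delta_teq_r t u u' : teq u u' -> delta t u = delta t u'.
Proof.
move=> H; rewrite /delta.
case: excluded_middle_informative => H1; case: excluded_middle_informative => H2 //.
- by case: H2; apply: teq_trans H1 H.
- by case: H1; apply: teq_trans H2 (teq_sym H).
Qed.

Lemma delta_teq_l t t' u : teq t t' -> delta t u = delta t' u.
Proof.
move=> H; rewrite /delta.
case: excluded_middle_informative => H1; case: excluded_middle_informative => H2 //.
- by case: H2; apply: teq_trans (teq_sym H) H1.
- by case: H1; apply: teq_trans H H2.
Qed.

Lemma ipR_resp t w w' : sequiv w w' -> ipR t w = ipR t w'.
Proof.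
induction 1 => //=; try congruence.
- by apply delta_teq_r.
- by rewrite addrC.
- by rewrite addrA.
- by rewrite add0r.
- by rewrite mul0r.
- by rewrite mul1r.
- by rewrite mulrA.
- by rewrite mulrDl.
- by rewrite mulrDr.
Qed.

Lemma ipR_teq t t' w : teq t t' -> ipR t w = ipR t' w.
Proof.
move=> H; elim: w => //= [u | a w -> | w1 -> w2 ->] //.
exact: delta_teq_l.
Qed.

Lemma ip_resp_l v v' w : sequiv v v' -> ip v w = ip v' w.
Proof.
induction 1 => //=; try congruence.
- by apply ipR_teq.
- by rewrite addrC.
- by rewrite addrA.
- by rewrite add0r.
- by rewrite conjC0 mul0r.
- by rewrite conjC1 mul1r.
- by rewrite mulrA rmorphM.
- by rewrite rmorphD mulrDl.
- by rewrite mulrDr.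
Qed.

Lemma pair_sup_resp u u' w w' : sequiv u u' -> sequiv w w' ->
  sequiv (pair_sup u w) (pair_sup u' w').
Proof.
move=> Hu Hw; rewrite /pair_sup.
apply: seq_trans (sbind_resp _ Hu) _.
- move=> t t' H; apply smap_pw => c; apply teq_Pair => //; exact: teq_refl.
- apply sbind_pw => t; apply smap_resp => // c c' H; apply teq_Pair => //; exact: teq_refl.
Qed.

Lemma syn_value_sbind f s : syn_value s -> (forall t, bval t -> syn_value (f t)) ->
  syn_value (sbind f s).
Proof. move=> Hs Hf; elim: s Hs => /=; intuition. Qed.

Lemma delta_pair ka kb t t' : pureK ka -> pureK kb ->
  delta (Pair ka kb) (Pair t t') = delta ka t * delta kb t'.
Proof.
move=> pa pb; rewrite /delta.
have pab : pureK (Pair ka kb) by rewrite /= pa pb.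
have E : teq (Pair ka kb) (Pair t t') <-> teq ka t /\ teq kb t'.
  rewrite (teq_pureK _ pab) (teq_pureK _ pa) (teq_pureK _ pb).
  by split => [[-> ->]|[-> ->]].
do 3 case: excluded_middle_informative => ? //=; rewrite ?mulr1 ?mul0r ?mulr0 //; tauto.
Qed.

Lemma ipR_pair ka kb u w : pureK ka -> pureK kb ->
  ipR (Pair ka kb) (pair_sup u w) = ipR ka u * ipR kb w.
Proof.
move=> pa pb; rewrite /pair_sup.
elim: u => /= [t | | a u -> | u1 -> u2 ->]; last first.
- by rewrite mulrDl.
- by rewrite mulrA.
- by rewrite mul0r.
elim: w => /= [t' | | b w -> | w1 -> w2 ->].
- exact: delta_pair.
- by rewrite mulr0.
- by rewrite mulrCA.
- by rewrite mulrDr.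
Qed.

Definition bit (i : nat) : term := if odd i then Ket1 else Ket0.
Fixpoint ket (m i : nat) : term :=
  match m with
  | 0 => bit i
  | S m' => match m' with 0 => bit i | S _ => Pair (bit i) (ket m' i./2) end
  end.

Lemma pureK_ket m i : pureK (ket m i).
Proof.
elim: m i => [|[|m] IH] i /=; rewrite /bit; try by case: odd.
by rewrite IH; case: odd.
Qed.

Lemma bval_ket m i : bval (ket m i).
Proof.
elim: m i => [|[|m] IH] i /=; rewrite /bit; try by case: odd.
by split; [case: odd|apply IH].
Qed.

Lemma closed_ket m i : cl_t [::] (ket m i).
Proof.
elim: m i => [|[|m] IH] i /=; rewrite /bit; try by case: odd.
by rewrite IH; case: odd.
Qed.

Lemma ket_sem m i : sem (tyBn m) env0 (STm (ket m i)).
Proof.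
elim: m i => [|[|m] IH] i /=; rewrite /bit; try by case: odd; [right|left]; apply seq_refl.
exists (STm (bit i)), (STm (ket m.+1 i./2)); split.
- by rewrite /bit; case: odd; [right|left]; apply seq_refl.
split; first exact: IH.
exact: seq_refl.
Qed.

Lemma ket_inj m i j : (i < 2 ^ m.+1)%N -> (j < 2 ^ m.+1)%N -> ket m.+1 i = ket m.+1 j -> i = j.
Proof.
elim: m i j => [|m IH] i j /=.
- rewrite /bit expn1 => Hi Hj.
  by case: i Hi => [|[|i]] //; case: j Hj => [|[|j]].
- move=> Hi Hj [Hb Hk].
  have Ho : odd i = odd j by move: Hb; rewrite /bit; do 2 case: odd.
  have Hh : i./2 = j./2.
    apply: IH Hk; rewrite -divn2 ltn_divLR // -expnSr //.
  by rewrite -(odd_double_half i) -(odd_double_half j) Ho Hh.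
Qed.


Lemma sem_ket m s : sem (tyBn m.+1) env0 s ->
  exists i, (i < 2 ^ m.+1)%N /\ sequiv s (STm (ket m.+1 i)).
Proof.
elim: m s => [|m IH] s /=.
- by case=> H; [exists 0%N|exists 1%N].
- move=> [v [w [Hv [Hw E]]]].
  case: (IH _ Hw) => j [Hj Ej].
  have [b Eb] : exists b : bool, sequiv v (STm (bit b)).
    by case: Hv => H; [exists false|exists true].
  exists (b + j.*2)%N; split.
  + rewrite expnS; move: Hj; set X := (2 ^ m.+1)%N; case: b {Eb} => /=; lia.
  apply: seq_trans E _.
  have -> : STm (Pair (bit (b + j.*2)) (ket m.+1 (b + j.*2)./2)) =
            pair_sup (STm (bit b)) (STm (ket m.+1 j)).
    by rewrite /pair_sup /= half_bit_double /bit oddD odd_double addbF oddb.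
  exact: pair_sup_resp.
Qed.

Lemma delta_ket m i j : (i < 2 ^ m.+1)%N -> (j < 2 ^ m.+1)%N ->
  delta (ket m.+1 i) (ket m.+1 j) = (i == j)%:R.
Proof.
move=> Hi Hj; rewrite /delta; case: excluded_middle_informative => H /=.
- have E := proj1 (teq_pureK _ (pureK_ket m.+1 i)) H.
  by rewrite (ket_inj Hi Hj E) eqxx.
- case: eqP => // E; case: H; rewrite E; exact: teq_refl.
Qed.

Lemma ip_ssum l w : ip (ssum l) w = \sum_(p <- l) (p.1)^* * ip p.2 w.
Proof. by elim: l => /= [|p l ->]; rewrite ?big_nil ?big_cons. Qed.

Lemma ipR_ssum t l : ipR t (ssum l) = \sum_(p <- l) p.1 * ipR t p.2.
Proof. by elim: l => /= [|p l ->]; rewrite ?big_nil ?big_cons. Qed.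

Lemma sbind_ssum f l : sbind f (ssum l) = ssum [seq (p.1, sbind f p.2) | p <- l].
Proof. by elim: l => //= p l ->. Qed.

Lemma In_map_seq (A B : Type) (f : A -> B) (s : seq A) (p : B) :
  List.In p (map f s) -> exists a, p = f a.
Proof. elim: s => //= a s IH [<-|H]; [by exists a | exact: IH]. Qed.

Definition vy m (y : 'I_(2 ^ m.+1) -> algC) : sup :=
  ssum [seq (y i, STm (ket m.+1 i)) | i <- index_enum 'I_(2 ^ m.+1)].

Lemma vy_sem m (y : 'I_(2 ^ m.+1) -> algC) : \sum_i (y i)^* * y i = 1 ->
  sem (TSharp (tyBn m.+1)) env0 (vy y).
Proof.
move=> Hy; split.
- exists [seq (y i, STm (ket m.+1 i)) | i <- index_enum 'I_(2 ^ m.+1)]; split.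
  + by move=> p Hp; case: (In_map_seq Hp) => i ->; apply: ket_sem.
  + exact: seq_refl.
- split.
  + exists (vy y); split; first exact: seq_refl.
    rewrite /vy /closed_s; split.
    * by elim: (index_enum _) => //= i s ->; rewrite andbT; exact: (closed_ket m.+1 i).
    * by elim: (index_enum _) => //= i s IH; split => //; exact: (bval_ket m.+1 i).
  + suff -> : ip (vy y) (vy y) = 1 by rewrite normr1 expr1n.
    rewrite {1}/vy ip_ssum big_map -Hy; apply: eq_bigr => i _ /=; congr (_ * _).
    rewrite /vy ipR_ssum big_map /=.
    rewrite (bigD1 i) //= delta_ket // eqxx mulr1 big1 ?addr0 // => j Hj.
    rewrite delta_ket //; case: eqP => [E|]; last by rewrite mulr0.
    by move: Hj; rewrite (val_inj E) eqxx.
Qed.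

Lemma coordinate m (y : 'I_(2 ^ m.+1) -> algC) L M p :
  ipR p (iter M stepS (app_sup L (vy y))) =
  \sum_i y i * ipR p (iter M stepS (STm (App L (ket m.+1 i)))).
Proof.
rewrite /app_sup smap_sbind iter_sbind /vy sbind_ssum ipR_ssum big_map big_map.
by apply: eq_bigr.
Qed.

Lemma syn_value_smap_pair a w : bval a -> syn_value w -> syn_value (smap (Pair a) w).
Proof. move=> Ha; elim: w => /=; intuition. Qed.

Lemma semB_value A1 A2 o : sem (TProd (TSharp A1) (TSharp A2)) env0 o ->
  exists o', sequiv o o' /\ syn_value o'.
Proof.
move=> [u [w [[_ [[u' [Eu [_ Vu]]] _]] [[_ [[w' [Ew [_ Vw]]] _]] E]]]].
exists (pair_sup u' w'); split.
- apply: seq_trans E _; exact: pair_sup_resp.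
- apply: syn_value_sbind => // t Ht; exact: syn_value_smap_pair.
Qed.

Lemma realize_eventual A1 A2 s : realizes s (sem (TProd (TSharp A1) (TSharp A2)) env0) ->
  exists o m, sem (TProd (TSharp A1) (TSharp A2)) env0 o /\
    forall M, (m <= M)%N -> sequiv (iter M stepS s) o.
Proof.
move=> [v [v' [Hr [E Hs]]]].
case: (reds_iter Hr) => m Hm.
case: (semB_value Hs) => o'' [E2 V2].
exists v', m; split => // M HM.
rewrite -(subnK HM) iterD.
apply: seq_trans (iter_resp _ Hm) _.
eapply seq_trans; [|exact E].
exact: (fix_value (seq_trans E E2) V2).
Qed.

Lemma nonzero m u : sem (TSharp (tyBn m.+1)) env0 u ->
  exists a, (a < 2 ^ m.+1)%N /\ ipR (ket m.+1 a) u != 0.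
Proof.
move=> [[l [Hl El]] [_ Hn]].
apply: NNPP => Hno.
have H0 : forall a, (a < 2 ^ m.+1)%N -> ipR (ket m.+1 a) u = 0.
  move=> a Ha; apply/eqP; apply: contraT => Hne; exfalso; apply: Hno; by exists a.
have : ip u u = 0.
  rewrite (ip_resp_l _ El) ip_ssum; clear El.
  elim: l Hl => [|p l IH] Hl; first by rewrite big_nil.
  rewrite big_cons IH; last by move=> q Hq; apply: Hl; right.
  case: (sem_ket (Hl p (or_introl erefl))) => a [Ha Ea].
  by rewrite (ip_resp_l _ Ea) /= H0 // mulr0 add0r.
by move=> E; rewrite E normr0 expr0n /= in Hn; move/eqP: Hn; rewrite eq_sym oner_eq0.
Qed.

Lemma normalize N (x : 'I_N -> algC) i0 : x i0 != 0 ->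
  exists r : algC, r != 0 /\ \sum_i (x i / r)^* * (x i / r) = 1.
Proof.
move=> Hx.
set s := \sum_i (x i)^* * x i.
have Hpos i : 0 <= (x i)^* * x i by rewrite mulrC mul_conjC_ge0.
have Hs : 0 < s.
  rewrite /s (bigD1 i0) //=; apply: ltr_wpDr; first by apply: sumr_ge0 => i _.
  by rewrite mulrC mul_conjC_gt0.
set r := sqrtC s.
have Hr : 0 < r by rewrite sqrtC_gt0.
have Hrc : (r^-1)^* = r^-1 by rewrite geC0_conj // invr_ge0 ltW.
have Hr2 : r ^+ 2 = s by rewrite sqrtCK.
clearbody r.
exists r; split; first by rewrite gt_eqF.
have -> : \sum_i (x i / r)^* * (x i / r) = s * (r * r)^-1.
  rewrite /s mulr_suml; apply: eq_bigr => i _.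
  have -> : (x i / r)^* = (x i)^* * (r^-1)^* by apply: rmorphM.
  by rewrite Hrc invfM; ring.
rewrite -expr2 Hr2 mulfV //; by rewrite gt_eqF.
Qed.

Lemma linalg (P Q N : nat) (HN : N = (P * Q)%N) (HP : (1 < P)%N) (HQ : (1 < Q)%N)
  (c : 'I_N -> nat -> nat -> algC) :
  (forall y : 'I_N -> algC, \sum_i (y i)^* * y i = 1 ->
     exists U W : nat -> algC,
       (forall a b, (a < P)%N -> (b < Q)%N -> \sum_i y i * c i a b = U a * W b) /\
       (exists a, (a < P)%N /\ U a != 0) /\ (exists b, (b < Q)%N /\ W b != 0)) -> False.
Proof.
subst N => Hy.
pose T : 'M[algC]_(P * Q, P * Q) := \matrix_(i, j) c i (j %/ Q)%N (j %% Q)%N.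
have ordab a b : (a < P)%N -> (b < Q)%N -> (a * Q + b < P * Q)%N.
  move=> Ha Hb; have : (a.+1 * Q <= P * Q)%N by rewrite leq_mul2r Ha orbT.
  rewrite mulSn; lia.
have divab a b : (b < Q)%N -> ((a * Q + b) %/ Q = a)%N.
  by move=> Hb; rewrite divnMDl ?divn_small ?addn0 //; lia.
have modab a b : (b < Q)%N -> ((a * Q + b) %% Q = b)%N.
  by move=> Hb; rewrite modnMDl modn_small.
have coord (v : 'rV_(P * Q)) a b (Ha : (a < P)%N) (Hb : (b < Q)%N) :
    (v *m T) 0 (Ordinal (ordab a b Ha Hb)) = \sum_i v 0 i * c i a b.
  rewrite mxE; apply: eq_bigr => i _; by rewrite mxE /= divab // modab.
have Tfree : row_free T.
  apply: inj_row_free => v Hv; apply/rowP => i0; rewrite mxE.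
  apply/eqP; apply: contraT => Hx.
  case: (normalize Hx) => r [Hr Hsum].
  case: (Hy _ Hsum) => U [W [HUW [[a [Ha HUa]] [b [Hb HWb]]]]].
  have := HUW a b Ha Hb.
  have -> : \sum_i v 0 i / r * c i a b = (v *m T) 0 (Ordinal (ordab a b Ha Hb)) / r.
    by rewrite coord mulr_suml; apply: eq_bigr => i _; ring.
  rewrite Hv mxE mul0r => /esym /eqP; by rewrite mulf_eq0 (negbTE HUa) (negbTE HWb).
have Tfull : row_full T by exact: Tfree.
pose E : 'rV[algC]_(P * Q) := \row_j (if ((j : nat) == 0%N) || ((j : nat) == Q.+1) then 1 else 0).
have /submxP [D HD] : (E <= T)%MS by apply: submx_full.
have H0 : (0 < P * Q)%N by lia.
have HE0 : E 0 (Ordinal H0) = 1 by rewrite mxE.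
have [i0 Hx] : exists i0, D 0 i0 != 0.
  apply/existsP; apply: contraT; rewrite negb_exists => /forallP Hall.
  have : E = 0.
    rewrite HD; apply/rowP => j; rewrite !mxE big1 // => i _.
    by move: (Hall i); rewrite negbK => /eqP ->; rewrite mul0r.
  by move/rowP/(_ (Ordinal H0)); rewrite HE0 mxE => /eqP; rewrite oner_eq0.
case: (normalize Hx) => r [Hr Hsum].
case: (Hy _ Hsum) => U [W [HUW _]].
have key a b (Ha : (a < P)%N) (Hb : (b < Q)%N) :
    U a * W b = E 0 (Ordinal (ordab a b Ha Hb)) / r.
  rewrite -HUW // HD coord mulr_suml; apply: eq_bigr => i _; ring.
have H0P : (0 < P)%N by lia.
have H0Q : (0 < Q)%N by lia.
have k00 := key 0%N 0%N H0P H0Q.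
have k11 := key 1%N 1%N HP HQ.
have k01 := key 0%N 1%N H0P HQ.
rewrite !mxE /= in k00 k11 k01.
rewrite mul1n in k11.
have Q1 : (Q.+1 == 0)%N = false by [].
have Q2 : (1 == Q.+1)%N = false by rewrite eqSS; lia.
rewrite add0n Q2 /= mul0r in k01.
rewrite addn1 eqxx orbT in k11.
have Hri : 1 / r != 0 by rewrite mul1r invr_eq0.
move/eqP: k01; rewrite mulf_eq0 => /orP [/eqP U0|/eqP W1].
- by move: k00; rewrite U0 mul0r => E0; rewrite -E0 eqxx in Hri.
- by move: k11; rewrite W1 mulr0 => E0; rewrite -E0 eqxx in Hri.
Qed.

Close Scope ring_scope.


Theorem mainTheorem4 (n k : nat) (hn : (1 <= n)%N) (hk : (1 <= k)%N) :
  forall (x : nat) (b : sup), closed_t (Lam x b) ->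
    ~ sem (TLin (TSharp (tyBn (n + k))) (TProd (TSharp (tyBn n)) (TSharp (tyBn k))))
          env0 (STm (Lam x b)).
Proof.
case: n hn => // n' _; case: k hk => // k' _.
move=> x b _ [x' [b' [_ [_ HL]]]].
set L := Lam x' b'.
set m := (n' + k'.+1)%N.
have HL' : forall v, sem (TSharp (tyBn m.+1)) env0 v ->
  realizes (app_sup L v) (sem (TProd (TSharp (tyBn n'.+1)) (TSharp (tyBn k'.+1))) env0) := HL.
clear HL.
pose d (i : 'I_(2 ^ m.+1)) M p := ipR p (iter M stepS (STm (App L (ket m.+1 i)))).
have ev : forall i, exists mi, forall M, (mi <= M)%N -> forall p, d i M p = d i mi p.
  move=> i; pose e := fun j : 'I_(2 ^ m.+1) => ((j == i)%:R : algC)%R.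
  have He : (\sum_j (e j)^* * e j = 1)%R.
    rewrite (bigD1 i) //= big1 ?addr0 /e ?eqxx ?conjC1 ?mulr1 // => j Hj.
    by rewrite (negbTE Hj) mulr0.
  case: (realize_eventual (HL' _ (vy_sem He))) => o [mi [_ Hmi]].
  exists mi => M HM p.
  have key M' : (mi <= M')%N -> d i M' p = ipR p o.
    move=> H; rewrite -(ipR_resp p (Hmi _ H)) coordinate (bigD1 i) //= big1 ?addr0.
      by rewrite /e eqxx mul1r.
    by move=> j Hj; rewrite /e (negbTE Hj) mul0r.
  by rewrite !key.
pose mf i := proj1_sig (constructive_indefinite_description _ (ev i)).
have Hmf i : forall M, (mf i <= M)%N -> forall p, d i M p = d i (mf i) p.
  exact: (proj2_sig (constructive_indefinite_description _ (ev i))).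
pose c (i : 'I_(2 ^ m.+1)) a b := d i (mf i) (Pair (ket n'.+1 a) (ket k'.+1 b)).
apply: (@linalg (2 ^ n'.+1) (2 ^ k'.+1) (2 ^ m.+1) _ _ _ c).
- by rewrite -expnD addSn.
- by rewrite expnS; have := expn_gt0 2 n'; lia.
- by rewrite expnS; have := expn_gt0 2 k'; lia.
move=> y Hy.
case: (realize_eventual (HL' _ (vy_sem Hy))) => o [my [Ho Hmy]].
set M := (my + \max_i mf i)%N.
have HM : (my <= M)%N by apply: leq_addr.
have HMi i : (mf i <= M)%N by have := @leq_bigmax _ mf i; rewrite /M; lia.
case: Ho => u [w [Hu [Hw Eo]]].
exists (fun a => ipR (ket n'.+1 a) u), (fun b => ipR (ket k'.+1 b) w); split; last split.
- move=> a b0 Ha Hb.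
  rewrite -ipR_pair ?pureK_ket // -(ipR_resp _ Eo) -(ipR_resp _ (Hmy _ HM)) coordinate.
  apply: eq_bigr => i _; congr (_ * _)%R; symmetry; exact: (Hmf i M (HMi i) (Pair (ket n'.+1 a) (ket k'.+1 b0))).
- exact: nonzero Hu.
- exact: nonzero Hw.
Qed.
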